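(* Let $\Delta x>0$, let $a=(a_j)_{j\in\mathbb Z}$ be a sequence in $\ell^2_\Delta(\mathbb Z)$ and $\gamma\in[0,\frac12)$. Then $$\Big\langle D_+D_+D_-(a),D\Big(\frac{a^2}{2}\Big)\Big\rangle\le\frac{\Delta x^{\frac12-\gamma}+\|a\|_{\ell^\infty}+9\|a\|^2_{\ell^\infty}\Delta x^{\gamma-\frac12}}{2}\|D_+D_-(a)\|^2_{\ell^2_\Delta}+\|a\|_{\ell^\infty}\|D_+D(a)\|^2_{\ell^2_\Delta}.$$
   Context: For sequences: $D_+(a)_j=(a_{j+1}-a_j)/\Delta x$, $D_-(a)_j=(a_j-a_{j-1})/\Delta x$, $D=\frac12(D_++D_-)$; $a^2$ is componentwise; $\langle a,b\rangle=\Delta x\sum_ja_jb_j$, $\|a\|_{\ell^2_\Delta}=\langle a,a\rangle^{1/2}$, $\|a\|_{\ell^\infty}=\sup_j|a_j|$. *)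

(* Defs.v *)
From Stdlib Require Import Reals ZArith.
From Coquelicot Require Import Coquelicot.
Open Scope R_scope.

Definition zseq := Z -> R.

Definition zsummable (f : zseq) : Prop :=
  ex_series (fun n : nat => f (Z.of_nat n)) /\
  ex_series (fun n : nat => f (- Z.of_nat (S n))%Z).

Definition zsum (f : zseq) : R :=
  Series (fun n : nat => f (Z.of_nat n)) +
  Series (fun n : nat => f (- Z.of_nat (S n))%Z).

Definition Dp (dx : R) (a : zseq) : zseq := fun j => (a (j + 1)%Z - a j) / dx.
Definition Dm (dx : R) (a : zseq) : zseq := fun j => (a j - a (j - 1)%Z) / dx.
Definition Dc (dx : R) (a : zseq) : zseq := fun j => (Dp dx a j + Dm dx a j) / 2.

Definition ip (dx : R) (a b : zseq) : R := dx * zsum (fun j => a j * b j).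
Definition l2norm (dx : R) (a : zseq) : R := sqrt (ip dx a a).

Definition in_l2 (a : zseq) : Prop := zsummable (fun j => a j ^ 2).

(* ||a||_{l^infty} = sup_j |a_j| (finite for a in l^2). *)
Definition linf (a : zseq) : R :=
  real (Lub_Rbar (fun r => exists j : Z, r = Rabs (a j))).

(* Main.v *)
Require Import Defs.
From Stdlib Require Import Reals ZArith Lra Lia Psatz.
From Coquelicot Require Import Coquelicot.
Open Scope R_scope.

Lemma exs_plus (a b : nat -> R) : ex_series a -> ex_series b -> ex_series (fun n => a n + b n).
Proof. intros; apply (ex_series_plus a b); auto. Qed.
Lemma exs_ext (a b : nat -> R) : (forall n, a n = b n) -> ex_series a -> ex_series b.
Proof. apply ex_series_ext. Qed.
Lemma exs_scal (c : R) (a : nat -> R) : ex_series a -> ex_series (fun n => c * a n).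
Proof. intros; apply (ex_series_scal_l c a); auto. Qed.

Lemma zsummable_ext f g : (forall j, f j = g j) -> zsummable f -> zsummable g.
Proof. intros H [H1 H2]; split; [eapply ex_series_ext; [|exact H1]|eapply ex_series_ext; [|exact H2]]; intros; simpl; auto. Qed.
Lemma zsum_ext f g : (forall j, f j = g j) -> zsum f = zsum g.
Proof. intros H; unfold zsum; f_equal; apply Series_ext; auto. Qed.

Lemma zsummable_plus f g : zsummable f -> zsummable g -> zsummable (fun j => f j + g j).
Proof. intros [A B] [C D]; split; apply exs_plus; auto. Qed.
Lemma zsummable_scal c f : zsummable f -> zsummable (fun j => c * f j).
Proof. intros [A B]; split; apply exs_scal; auto. Qed.
Lemma zsum_plus f g : zsummable f -> zsummable g -> zsum (fun j => f j + g j) = zsum f + zsum g.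
Proof. intros [A B] [C D]; unfold zsum. rewrite !Series_plus; auto; ring. Qed.
Lemma zsum_scal c f : zsum (fun j => c * f j) = c * zsum f.
Proof. unfold zsum. rewrite !Series_scal_l; ring. Qed.

Lemma zsummable_shift1 f : zsummable f <-> zsummable (fun j => f (j + 1)%Z).
Proof.
  unfold zsummable.
  assert (E1: ex_series (fun n : nat => f (Z.of_nat n)) <-> ex_series (fun n : nat => f (Z.of_nat n + 1)%Z)).
  { rewrite (ex_series_incr_1 (fun n : nat => f (Z.of_nat n))).
    split; apply ex_series_ext; intro n; f_equal; lia. }
  assert (E2: ex_series (fun n : nat => f (- Z.of_nat (S n))%Z) <-> ex_series (fun n : nat => f (- Z.of_nat (S n) + 1)%Z)).
  { rewrite (ex_series_incr_1 (fun n : nat => f (- Z.of_nat (S n) + 1)%Z)).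
    split; apply ex_series_ext; intro n; f_equal; lia. }
  tauto.
Qed.

Lemma zsum_shift1 f : zsummable f -> zsum (fun j => f (j + 1)%Z) = zsum f.
Proof.
  intros [A B]; unfold zsum.
  rewrite (Series_incr_1 (fun n : nat => f (Z.of_nat n))) by auto.
  assert (B' : ex_series (fun n : nat => f (- Z.of_nat (S n) + 1)%Z)).
  { apply (proj2 (ex_series_incr_1 _)). eapply ex_series_ext; [|exact B]. intro n; cbv beta; f_equal; lia. }
  rewrite (Series_incr_1 (fun n : nat => f (- Z.of_nat (S n) + 1)%Z)) by auto.
  rewrite (Series_ext (fun k : nat => f (Z.of_nat (S k))) (fun n : nat => f (Z.of_nat n + 1)%Z)) by (intro; f_equal; lia).
  rewrite (Series_ext (fun k : nat => f (- Z.of_nat (S (S k)) + 1)%Z) (fun n : nat => f (- Z.of_nat (S n))%Z)) by (intro; f_equal; lia).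
  replace (- Z.of_nat 1 + 1)%Z with (Z.of_nat 0) by reflexivity. ring.
Qed.

Lemma zshift_all (k : Z) : forall f, zsummable f ->
  zsummable (fun j => f (j + k)%Z) /\ zsum (fun j => f (j + k)%Z) = zsum f.
Proof.
  induction k using Z.peano_ind; intros f Hf.
  - split; [eapply zsummable_ext; [|exact Hf]|apply zsum_ext]; intro; f_equal; lia.
  - destruct (IHk f Hf) as [H1 H2].
    assert (e: forall j, f (j + Z.succ k)%Z = f (j + 1 + k)%Z) by (intro; f_equal; lia).
    split.
    + eapply zsummable_ext; [intro j; symmetry; apply e|].
      apply (proj1 (zsummable_shift1 (fun j => f (j + k)%Z))); auto.
    + rewrite (zsum_ext _ (fun j => f (j + 1 + k)%Z)) by auto.
      rewrite (zsum_shift1 (fun j => f (j + k)%Z)); auto.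
  - destruct (IHk f Hf) as [H1 H2].
    set (g := fun j => f (j + Z.pred k)%Z).
    assert (e: forall j, g (j + 1)%Z = f (j + k)%Z) by (intro; unfold g; f_equal; lia).
    assert (Hg: zsummable g).
    { apply (proj2 (zsummable_shift1 g)). eapply zsummable_ext; [intro j; symmetry; apply e|]. auto. }
    split; auto.
    fold g. rewrite <- (zsum_shift1 g Hg). rewrite (zsum_ext _ _ e). auto.
Qed.
Lemma Series_mono (a b : nat -> R) : ex_series a -> ex_series b -> (forall n, a n <= b n) -> Series a <= Series b.
Proof.
  intros Ha Hb H.
  assert (Hm : Series (fun n => b n - a n) = Series b - Series a) by (apply Series_minus; auto).
  assert (H0 : Series (fun n : nat => 0 * a n) <= Series (fun n => b n - a n)).
  { apply Series_le. intro n; specialize (H n); lra.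
    apply (exs_ext (fun n => b n + (-1) * a n)); [intro; ring|].
    apply exs_plus; [|apply exs_scal]; auto. }
  rewrite Series_scal_l in H0. lra.
Qed.

Lemma zsum_le f g : zsummable f -> zsummable g -> (forall j, f j <= g j) -> zsum f <= zsum g.
Proof.
  intros [A B] [C D] H; unfold zsum.
  apply Rplus_le_compat; apply Series_mono; auto.
Qed.

Lemma zsummable_dom f g : (forall j, Rabs (g j) <= f j) -> zsummable f -> zsummable g.
Proof.
  intros H [A B]; split.
  - apply (ex_series_le (fun n => g (Z.of_nat n)) (fun n => f (Z.of_nat n))); auto.
  - apply (ex_series_le (fun n => g (- Z.of_nat (S n))%Z) (fun n => f (- Z.of_nat (S n))%Z)); auto.
Qed.

Definition asum (f : zseq) := zsummable (fun j => Rabs (f j)).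
Definition l2 (f : zseq) := zsummable (fun j => f j ^ 2).
Definition bnd (f : zseq) := exists B, forall j, Rabs (f j) <= B.

Lemma asum_sum f : asum f -> zsummable f.
Proof. intro H. apply (zsummable_dom (fun j => Rabs (f j))); auto. intro; lra. Qed.

Lemma asum_dom f g : (forall j, Rabs (g j) <= f j) -> zsummable f -> asum g.
Proof. intros H Hf. apply (zsummable_dom f); auto. intro j; rewrite Rabs_Rabsolu; auto. Qed.

Lemma asum_ext f g : (forall j, f j = g j) -> asum f -> asum g.
Proof. intros H Hf. apply (asum_dom (fun j => Rabs (f j))); auto. intro j; rewrite H; lra. Qed.

Lemma asum_plus f g : asum f -> asum g -> asum (fun j => f j + g j).
Proof. intros A B. apply (asum_dom (fun j => Rabs (f j) + Rabs (g j))).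
  intro; apply Rabs_triang. apply zsummable_plus; auto. Qed.

Lemma asum_scal c f : asum f -> asum (fun j => c * f j).
Proof. intros A. apply (asum_dom (fun j => Rabs c * Rabs (f j))).
  intro; rewrite Rabs_mult; lra. apply zsummable_scal; auto. Qed.

Lemma asum_shift k f : asum f -> asum (fun j => f (j + k)%Z).
Proof. intros A. exact (proj1 (zshift_all k _ A)). Qed.

Lemma asum_mul_bnd b f : bnd b -> asum f -> asum (fun j => b j * f j).
Proof. intros [B HB] A. apply (asum_dom (fun j => B * Rabs (f j))).
  intro j; rewrite Rabs_mult. apply Rmult_le_compat_r; auto. apply Rabs_pos.
  apply zsummable_scal; auto. Qed.

Lemma l2_ext f g : (forall j, f j = g j) -> l2 f -> l2 g.
Proof. intros H. apply zsummable_ext. intro; rewrite H; auto. Qed.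

Lemma l2_mul f g : l2 f -> l2 g -> asum (fun j => f j * g j).
Proof. intros A B. apply (asum_dom (fun j => / 2 * (f j ^ 2 + g j ^ 2))).
  intro j. rewrite Rabs_mult.
  assert (0 <= (Rabs (f j) - Rabs (g j))^2) by apply pow2_ge_0.
  rewrite <- (pow2_abs (f j)), <- (pow2_abs (g j)). nra.
  apply zsummable_scal, zsummable_plus; auto. Qed.

Lemma l2_plus f g : l2 f -> l2 g -> l2 (fun j => f j + g j).
Proof. intros A B. unfold l2.
  apply (zsummable_dom (fun j => 2 * (f j ^ 2 + g j ^ 2))).
  intro j. rewrite Rabs_right. assert (0 <= (f j - g j)^2) by apply pow2_ge_0. nra.
  apply Rle_ge, pow2_ge_0.
  apply zsummable_scal, zsummable_plus; auto. Qed.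

Lemma l2_scal c f : l2 f -> l2 (fun j => c * f j).
Proof. intros A. unfold l2.
  apply (zsummable_ext (fun j => c^2 * f j ^ 2)). intro; ring.
  apply zsummable_scal; auto. Qed.

Lemma l2_shift k f : l2 f -> l2 (fun j => f (j + k)%Z).
Proof. intros A. exact (proj1 (zshift_all k _ A)). Qed.

Lemma l2_asum f : l2 f -> asum (fun j => f j ^ 2).
Proof. intros A. apply (asum_dom (fun j => f j ^ 2)); auto. intro; rewrite Rabs_right. lra. apply Rle_ge, pow2_ge_0. Qed.

Lemma bnd_plus f g : bnd f -> bnd g -> bnd (fun j => f j + g j).
Proof. intros [A HA] [B HB]. exists (A + B). intro j. eapply Rle_trans. apply Rabs_triang. specialize (HA j); specialize (HB j); lra. Qed.
Lemma bnd_scal c f : bnd f -> bnd (fun j => c * f j).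
Proof. intros [A HA]. exists (Rabs c * A). intro j. rewrite Rabs_mult. apply Rmult_le_compat_l; auto. apply Rabs_pos. Qed.
Lemma bnd_mul f g : bnd f -> bnd g -> bnd (fun j => f j * g j).
Proof. intros [A HA] [B HB]. exists (A * B). intro j. rewrite Rabs_mult. apply Rmult_le_compat; auto; apply Rabs_pos. Qed.
Lemma bnd_shift k f : bnd f -> bnd (fun j => f (j + k)%Z).
Proof. intros [A HA]. exists A. auto. Qed.
Lemma bnd_ext f g : (forall j, f j = g j) -> bnd f -> bnd g.
Proof. intros H [A HA]. exists A. intro j; rewrite <- H; auto. Qed.
Lemma Series_nonneg0 (u : nat -> R) : ex_series u -> (forall k, 0 <= u k) -> 0 <= Series u.
Proof. intros H P. assert (Series (fun n => 0 * u n) <= Series u).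
  apply Series_le; auto. intro n; specialize (P n); lra.
  rewrite Series_scal_l in H0; lra. Qed.

Lemma term_le_Series (u : nat -> R) n : ex_series u -> (forall k, 0 <= u k) -> u n <= Series u.
Proof.
  intros H P. rewrite (Series_incr_n u (S n)) by (auto; lia).
  assert (0 <= Series (fun k => u (S n + k)%nat)).
  { apply Series_nonneg0; [|intro; apply P]. apply (ex_series_incr_n u (S n)); auto. }
  simpl Init.Nat.pred. set (T := Series _) in *. destruct n as [|n]. { simpl; lra. } simpl.
  assert (0 <= sum_f_R0 u n) by (apply cond_pos_sum; auto).
  specialize (P (S n)); lra.
Qed.

Lemma a_bounded (a : zseq) : in_l2 a -> exists M, forall j, Rabs (a j) <= M.
Proof.
  intros [A B].
  set (SS := Series (fun n : nat => a (Z.of_nat n) ^ 2) + Series (fun n : nat => a (- Z.of_nat (S n))%Z ^ 2)).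
  assert (P : forall x : R, 0 <= x ^ 2) by (intro; apply pow2_ge_0).
  assert (H0 : 0 <= Series (fun n : nat => a (Z.of_nat n) ^ 2)) by (apply Series_nonneg0; auto).
  assert (H1 : 0 <= Series (fun n : nat => a (- Z.of_nat (S n))%Z ^ 2)) by (apply Series_nonneg0; auto).
  assert (Hs : forall j, a j ^ 2 <= SS).
  { intro j. destruct (Z_le_gt_dec 0 j).
    - destruct (Z_of_nat_complete j l) as [n ->].
      pose proof (term_le_Series (fun n : nat => a (Z.of_nat n) ^ 2) n A (fun k => P _)). unfold SS; simpl in *; lra.
    - assert (j = - Z.of_nat (S (Z.to_nat (- j - 1))))%Z by lia.
      rewrite H.
      pose proof (term_le_Series (fun n : nat => a (- Z.of_nat (S n))%Z ^ 2) (Z.to_nat (- j - 1)) B (fun k => P _)).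
      unfold SS; simpl in *; lra. }
  exists (1 + SS). intro j. specialize (Hs j). rewrite <- (pow2_abs (a j)) in Hs.
  pose proof (Rabs_pos (a j)). nra.
Qed.

Lemma linf_prop (a : zseq) : in_l2 a -> (forall j, Rabs (a j) <= linf a) /\ 0 <= linf a.
Proof.
  intros Ha. destruct (a_bounded a Ha) as [M HM].
  unfold linf.
  destruct (Lub_Rbar_correct (fun r => exists j : Z, r = Rabs (a j))) as [Hub Hl].
  assert (L1 : forall j, Rbar_le (Rabs (a j)) (Lub_Rbar (fun r => exists j : Z, r = Rabs (a j)))).
  { intro j. apply Hub. exists j; auto. }
  assert (L2 : Rbar_le (Lub_Rbar (fun r => exists j : Z, r = Rabs (a j))) M).
  { apply Hl. intros x [j ->]. simpl. auto. }
  specialize (L1 0%Z) as L0.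
  destruct (Lub_Rbar (fun r => exists j : Z, r = Rabs (a j))) as [r| |]; simpl in *; try contradiction.
  split; auto. pose proof (Rabs_pos (a 0%Z)); lra.
Qed.
Lemma pw1 (W0 W1 M L : R) : Rabs M <= L ->
  -(W0 * ((W0+W1)/2 * M)) <= L * (W0^2/4 + W1^2/4 + ((W0+W1)/2)^2).
Proof.
  intros HM. set (X := W0 * ((W0+W1)/2)). set (K := W0^2/4 + W1^2/4 + ((W0+W1)/2)^2).
  assert (HX : Rabs X <= K).
  { unfold X, K. apply Rabs_le. assert (0 <= (W0+W1)^2) by apply pow2_ge_0.
    assert (0 <= W1^2) by apply pow2_ge_0. assert (0 <= W0^2) by apply pow2_ge_0. split; nra. }
  replace (-(W0 * ((W0+W1)/2 * M))) with (-(X * M)) by (unfold X; ring).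
  eapply Rle_trans. apply Rle_abs. rewrite Rabs_Ropp, Rabs_mult.
  rewrite (Rmult_comm L). apply Rmult_le_compat; auto; apply Rabs_pos.
Qed.

Lemma pw2 (W0 P0 P1 P2 eps : R) : 0 < eps ->
  -(W0 * ((P1+P2)/2 * ((P0+P2)/2))) <= eps/2 * W0^2 + (P1^4 + 2*P2^4 + P0^4)/(8*eps).
Proof.
  intros He. set (Q := (P1+P2)/2 * ((P0+P2)/2)).
  assert (HQ : Q^2 <= (P1^4 + 2*P2^4 + P0^4)/4).
  { unfold Q.
    assert (0 <= (P1-P2)^2) by apply pow2_ge_0.
    assert (0 <= (P0-P2)^2) by apply pow2_ge_0.
    assert (0 <= (P1^2 - P0^2)^2) by apply pow2_ge_0.
    assert (0 <= (P1^2 - P2^2)^2) by apply pow2_ge_0.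
    assert (0 <= (P0^2 - P2^2)^2) by apply pow2_ge_0.
    assert (h1 : ((P1+P2)/2)^2 <= (P1^2+P2^2)/2) by nra.
    assert (h2 : ((P0+P2)/2)^2 <= (P0^2+P2^2)/2) by nra.
    assert (h3 : (P1^2+P2^2)*(P0^2+P2^2) <= ((P1^2+P2^2)^2 + (P0^2+P2^2)^2)/2) by nra.
    assert (h4 : 0 <= ((P1+P2)/2)^2) by apply pow2_ge_0.
    assert (h5 : 0 <= ((P0+P2)/2)^2) by apply pow2_ge_0.
    replace (((P1 + P2) / 2 * ((P0 + P2) / 2)) ^ 2) with (((P1+P2)/2)^2 * ((P0+P2)/2)^2) by ring.
    assert (((P1+P2)/2)^2 * ((P0+P2)/2)^2 <= (P1^2+P2^2)/2 * ((P0^2+P2^2)/2)).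
    { apply Rmult_le_compat; auto. }
    nra. }
  assert (H1 : -(W0 * Q) <= eps/2 * W0^2 + Q^2/(2*eps)).
  { assert (0 <= (eps * W0 + Q)^2) by apply pow2_ge_0.
    assert (E : eps/2 * W0^2 + Q^2/(2*eps) + W0 * Q = (eps * W0 + Q)^2 / (2*eps)) by (field; lra).
    assert (0 <= (eps * W0 + Q)^2 / (2*eps)) by (apply Rmult_le_pos; [auto| left; apply Rinv_0_lt_compat; lra]).
    lra. }
  assert (Q^2/(2*eps) <= (P1^4 + 2*P2^4 + P0^4)/(8*eps)).
  { replace ((P1^4 + 2*P2^4 + P0^4)/(8*eps)) with (((P1^4 + 2*P2^4 + P0^4)/4)/(2*eps)) by (field; lra).
    apply Rmult_le_compat_r; auto. left; apply Rinv_0_lt_compat; lra. }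
  lra.
Qed.

Lemma pw3 (A W P0 P1 L : R) : Rabs A <= L ->
  -(A * W * (P0^2 + P0*P1 + P1^2)) <= 9*L^2*W^2/2 + (P0^4 + P1^4)/4.
Proof.
  intros HA. set (Y := P0^2 + P0*P1 + P1^2).
  assert (0 <= (P0+P1)^2) by apply pow2_ge_0.
  assert (0 <= (P0-P1)^2) by apply pow2_ge_0.
  assert (0 <= P0^2) by apply pow2_ge_0.
  assert (0 <= P1^2) by apply pow2_ge_0.
  assert (0 <= (P0^2-P1^2)^2) by apply pow2_ge_0.
  assert (Y0 : 0 <= Y) by (unfold Y; nra).
  assert (Y1 : Y <= 3/2*(P0^2+P1^2)) by (unfold Y; nra).
  assert (G1 : -(A * W * Y) <= L * Rabs W * Y).
  { eapply Rle_trans. apply Rle_abs. rewrite Rabs_Ropp, !Rabs_mult, (Rabs_right Y) by lra.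
    apply Rmult_le_compat_r; auto. apply Rmult_le_compat_r; auto. apply Rabs_pos. }
  assert (L0 : 0 <= L) by (pose proof (Rabs_pos A); lra).
  assert (G2 : L * Rabs W * Y <= (3 * L * Rabs W) * ((P0^2+P1^2)/2)).
  { assert (0 <= L * Rabs W) by (apply Rmult_le_pos; auto; apply Rabs_pos). nra. }
  assert (G3 : (3 * L * Rabs W) * ((P0^2+P1^2)/2) <= (3*L*Rabs W)^2/2 + ((P0^2+P1^2)/2)^2/2).
  { assert (0 <= (3 * L * Rabs W - (P0^2+P1^2)/2)^2) by apply pow2_ge_0. nra. }
  assert (G4 : (3*L*Rabs W)^2 = 9*L^2*W^2).
  { replace ((3*L*Rabs W)^2) with (9*L^2*(Rabs W)^2) by ring. rewrite pow2_abs. ring. }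
  assert (G5 : ((P0^2+P1^2)/2)^2/2 <= (P0^4 + P1^4)/4) by nra.
  lra.
Qed.
Definition pp (h : R) (a : zseq) : zseq := fun j => (a (j+1)%Z - a j) / h.
Definition ww (h : R) (a : zseq) : zseq := fun j => (pp h a j - pp h a (j-1)%Z) / h.
Definition EE (h : R) (a : zseq) : zseq := fun j => (pp h a j + pp h a (j-1)%Z) * (a (j+1)%Z + a (j-1)%Z) / 4.

Lemma DpDm h a j : h <> 0 -> Dp h (Dm h a) j = ww h a j.
Proof. intro. unfold Dp, Dm, ww, pp. rewrite Z.add_simpl_r, Z.sub_add. field; auto. Qed.

Lemma DcSq h a j : h <> 0 -> Dc h (fun j => a j ^ 2 / 2) j = EE h a j.
Proof. intro. unfold Dc, Dp, Dm, EE, pp. rewrite Z.sub_add. field; auto. Qed.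

Lemma DpDc h a j : h <> 0 -> Dp h (Dc h a) j = (ww h a (j+1)%Z + ww h a j) / 2.
Proof. intro. unfold Dc, Dp, Dm, ww, pp. rewrite !Z.add_simpl_r, !Z.sub_add. field; auto. Qed.

Lemma zsum_tele d : asum d -> zsum (fun j => d (j+1)%Z - d j) = 0.
Proof.
  intro Hd. pose proof (asum_sum _ Hd) as Hs.
  pose proof (zshift_all 1 d Hs) as [H1 H2].
  rewrite (zsum_ext _ (fun j => d (j+1)%Z + (-1) * d j)) by (intro; ring).
  rewrite zsum_plus, zsum_scal, H2; auto. ring. apply zsummable_scal; auto.
Qed.

Lemma zsum_nonneg f : zsummable f -> (forall j, 0 <= f j) -> 0 <= zsum f.
Proof.
  intros Hf P. assert (zsum (fun j => 0 * f j) <= zsum f).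
  apply zsum_le; auto. apply zsummable_scal; auto. intro j; specialize (P j); lra.
  rewrite zsum_scal in H; lra.
Qed.

Lemma l2_a_shift a k : in_l2 a -> l2 (fun j => a (j + k)%Z).
Proof. intro Ha. apply l2_shift. exact Ha. Qed.

Lemma l2_pp h a : in_l2 a -> l2 (pp h a).
Proof. intro Ha. apply (l2_ext (fun j => / h * (a (j+1)%Z + (-1) * a j))). intro; unfold pp; unfold Rdiv; ring.
  apply l2_scal, l2_plus. apply l2_a_shift; auto. apply l2_scal; exact Ha. Qed.

Lemma l2_ww h a : in_l2 a -> l2 (ww h a).
Proof. intro Ha. apply (l2_ext (fun j => / h * (pp h a j + (-1) * pp h a (j + -1)%Z))). intro j; unfold ww; unfold Rdiv; replace (j - 1)%Z with (j + -1)%Z by lia; ring.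
  apply l2_scal, l2_plus. apply l2_pp; auto. apply l2_scal; apply l2_shift, l2_pp; auto. Qed.

Lemma bnd_a a : in_l2 a -> bnd a.
Proof. intro Ha. destruct (a_bounded a Ha) as [M HM]. exists M; auto. Qed.

Lemma bnd_pp h a : in_l2 a -> bnd (pp h a).
Proof. intro Ha. apply (bnd_ext (fun j => / h * (a (j+1)%Z + (-1) * a j))). intro; unfold pp; unfold Rdiv; ring.
  apply bnd_scal, bnd_plus. apply bnd_shift, bnd_a; auto. apply bnd_scal, bnd_a; auto. Qed.

Lemma bnd_ww h a : in_l2 a -> bnd (ww h a).
Proof. intro Ha. apply (bnd_ext (fun j => / h * (pp h a j + (-1) * pp h a (j + -1)%Z))). intro j; unfold ww; unfold Rdiv; replace (j - 1)%Z with (j + -1)%Z by lia; ring.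
  apply bnd_scal, bnd_plus. apply bnd_pp; auto. apply bnd_scal, bnd_shift, bnd_pp; auto. Qed.

Lemma asum_EE h a : in_l2 a -> asum (EE h a).
Proof. intro Ha.
  apply (asum_ext (fun j => (/4 * (pp h a j + pp h a (j + -1)%Z)) * (a (j + 1)%Z + a (j + -1)%Z))).
  intro j; unfold EE; unfold Rdiv; replace (j - 1)%Z with (j + -1)%Z by lia; ring.
  apply l2_mul. apply l2_scal, l2_plus. apply l2_pp; auto. apply l2_shift, l2_pp; auto.
  apply l2_plus; apply l2_a_shift; auto. Qed.

Lemma asum_pp4 h a : in_l2 a -> asum (fun j => pp h a j ^ 4).
Proof. intro Ha. apply (asum_ext (fun j => pp h a j ^ 2 * pp h a j ^ 2)). intro; ring.
  apply asum_mul_bnd. apply (bnd_ext (fun j => pp h a j * pp h a j)). intro; ring.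
  apply bnd_mul; apply bnd_pp; auto. apply l2_asum, l2_pp; auto. Qed.
Lemma abs_avg x y L : Rabs x <= L -> Rabs y <= L -> Rabs ((x + y) / 2) <= L.
Proof. unfold Rabs; repeat destruct Rcase_abs; intros; lra. Qed.

Lemma asum_tele d : asum d -> asum (fun j => d (j+1)%Z - d j).
Proof. intro Hd. apply (asum_ext (fun j => d (j+1)%Z + (-1) * d j)). intro; ring.
  apply asum_plus. apply asum_shift; auto. apply asum_scal; auto. Qed.

Ltac zs := repeat (apply zsummable_plus || apply zsummable_scal); auto.

Theorem lemma10 (dx : R) (a : zseq) (gamma : R) :
  0 < dx -> in_l2 a -> 0 <= gamma < 1/2 ->
  ip dx (Dp dx (Dp dx (Dm dx a))) (Dc dx (fun j => a j ^ 2 / 2))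
  <= (Rpower dx (1/2 - gamma) + linf a
      + 9 * linf a ^ 2 * Rpower dx (gamma - 1/2)) / 2
       * l2norm dx (Dp dx (Dm dx a)) ^ 2
     + linf a * l2norm dx (Dp dx (Dc dx a)) ^ 2.
Proof.
  intros Hh Ha Hg.
  assert (h0 : dx <> 0) by lra.
  destruct (linf_prop a Ha) as [HL L0]. set (L := linf a) in *.
  set (eps := Rpower dx (1/2 - gamma)).
  assert (Heps : 0 < eps) by (unfold eps, Rpower; apply exp_pos).
  assert (Hinv : Rpower dx (gamma - 1/2) = / eps).
  { unfold eps; rewrite <- Rpower_Ropp; f_equal; ring. }
  rewrite Hinv.
  assert (lw : l2 (ww dx a)) by (apply l2_ww; auto).
  assert (bw : bnd (ww dx a)) by (apply bnd_ww; auto).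
  assert (aE : asum (EE dx a)) by (apply asum_EE; auto).
  assert (ap4 : asum (fun j => pp dx a j ^ 4)) by (apply asum_pp4; auto).
  set (F := fun j => (ww dx a (j+1)%Z - ww dx a j) / dx * EE dx a j).
  assert (LHSeq : ip dx (Dp dx (Dp dx (Dm dx a))) (Dc dx (fun j => a j ^ 2 / 2)) = dx * zsum F).
  { unfold ip. f_equal. apply zsum_ext. intro j. unfold F. rewrite DcSq by auto.
    unfold Dp at 1. rewrite !DpDm by auto. reflexivity. }
  set (d := fun j => ww dx a j * EE dx a (j-1)%Z / dx).
  assert (ad : asum d).
  { apply (asum_ext (fun j => (/dx * ww dx a j) * EE dx a (j + -1)%Z)).
    intro j; unfold d; replace (j - 1)%Z with (j + -1)%Z by lia; unfold Rdiv; ring.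
    apply asum_mul_bnd. apply bnd_scal; auto. apply asum_shift; auto. }
  set (G := fun j => -(ww dx a j * (EE dx a j - EE dx a (j-1)%Z) / dx)).
  assert (FG : forall j, F j = G j + (d (j+1)%Z - d j)).
  { intro j; unfold F, G, d; rewrite Z.add_simpl_r; field; auto. }
  assert (aF : asum F).
  { apply (asum_ext (fun j => (/dx * (ww dx a (j+1)%Z + (-1) * ww dx a j)) * EE dx a j)).
    intro j; unfold F; unfold Rdiv; ring.
    apply asum_mul_bnd; auto. apply bnd_scal, bnd_plus. apply bnd_shift; auto. apply bnd_scal; auto. }
  assert (sG : zsummable G).
  { apply (zsummable_ext (fun j => F j + (-1) * (d (j+1)%Z - d j))).
    intro j; rewrite FG; ring.
    apply zsummable_plus. apply asum_sum; auto. apply zsummable_scal, asum_sum, asum_tele; auto. }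
  assert (zFG : zsum F = zsum G).
  { rewrite (zsum_ext F (fun j => G j + (d (j+1)%Z - d j))) by auto.
    rewrite zsum_plus, zsum_tele; auto. ring. apply asum_sum, asum_tele; auto. }
  set (H := fun j => L / 4 * ww dx a j ^ 2 + (L / 4 * ww dx a (j-1)%Z ^ 2
      + (L * ((ww dx a j + ww dx a (j-1)%Z)/2)^2 + (eps/2 * ww dx a j ^ 2
      + (/(8*eps) * pp dx a (j-1)%Z ^ 4 + (2/(8*eps) * pp dx a (j-1-1)%Z ^ 4
      + /(8*eps) * pp dx a j ^ 4)))))).
  assert (GH : forall j, G j <= H j).
  { intro j.
    assert (eq : G j = -(ww dx a j * ((ww dx a j + ww dx a (j-1)%Z)/2 * ((a (j+1)%Z + a (j-1)%Z)/2)))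
       + -(ww dx a j * ((pp dx a (j-1)%Z + pp dx a (j-1-1)%Z)/2 * ((pp dx a j + pp dx a (j-1-1)%Z)/2)))).
    { unfold G, EE, ww, pp. rewrite !Z.sub_add. field. auto. }
    rewrite eq.
    pose proof (pw1 (ww dx a j) (ww dx a (j-1)%Z) ((a (j+1)%Z + a (j-1)%Z)/2) L (abs_avg _ _ _ (HL _) (HL _))).
    pose proof (pw2 (ww dx a j) (pp dx a j) (pp dx a (j-1)%Z) (pp dx a (j-1-1)%Z) eps Heps).
    unfold H.
    assert (E1 : (pp dx a (j - 1)%Z ^ 4 + 2 * pp dx a (j - 1 - 1)%Z ^ 4 + pp dx a j ^ 4) / (8 * eps)
      = /(8*eps) * pp dx a (j-1)%Z ^ 4 + (2/(8*eps) * pp dx a (j-1-1)%Z ^ 4 + /(8*eps) * pp dx a j ^ 4))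
      by (field; lra).
    lra. }
  set (W := zsum (fun j => ww dx a j ^ 2)).
  set (S := zsum (fun j => ((ww dx a j + ww dx a (j-1)%Z)/2)^2)).
  set (S4 := zsum (fun j => pp dx a j ^ 4)).
  assert (s1 : zsummable (fun j => ww dx a j ^ 2)) by exact lw.
  assert (s2 : zsummable (fun j => ww dx a (j-1)%Z ^ 2)) by exact (l2_shift (-1) _ lw).
  assert (s3 : zsummable (fun j => ((ww dx a j + ww dx a (j-1)%Z)/2)^2)).
  { apply (l2_ext (fun j => /2 * (ww dx a j + ww dx a (j + -1)%Z))).
    intro j; replace (j - 1)%Z with (j + -1)%Z by lia; unfold Rdiv; ring.
    apply l2_scal, l2_plus; [auto | apply l2_shift; auto]. }
  assert (s6 : zsummable (fun j => pp dx a j ^ 4)) by (apply asum_sum; auto).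
  assert (s4 : zsummable (fun j => pp dx a (j-1)%Z ^ 4)) by exact (proj1 (zshift_all (-1) _ s6)).
  assert (s5 : zsummable (fun j => pp dx a (j-1-1)%Z ^ 4)).
  { apply (zsummable_ext (fun j => pp dx a (j + -2)%Z ^ 4)). intro j; f_equal; f_equal; lia.
    exact (proj1 (zshift_all (-2) _ s6)). }
  assert (z2 : zsum (fun j => ww dx a (j-1)%Z ^ 2) = W) by exact (proj2 (zshift_all (-1) _ lw)).
  assert (z4 : zsum (fun j => pp dx a (j-1)%Z ^ 4) = S4) by exact (proj2 (zshift_all (-1) _ s6)).
  assert (z5 : zsum (fun j => pp dx a (j-1-1)%Z ^ 4) = S4).
  { rewrite (zsum_ext _ (fun j => pp dx a (j + -2)%Z ^ 4)) by (intro j; f_equal; f_equal; lia).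
    exact (proj2 (zshift_all (-2) _ s6)). }
  assert (zH : zsum H = L/4*W + (L/4*W + (L*S + (eps/2*W + (/(8*eps)*S4 + (2/(8*eps)*S4 + /(8*eps)*S4)))))).
  { unfold H. repeat (rewrite zsum_plus; [|zs|zs]). rewrite !zsum_scal. rewrite z2, z4, z5. reflexivity. }
  assert (GleH : zsum G <= zsum H).
  { apply zsum_le; auto. unfold H; zs. }
  set (T := fun j => -(a j * ww dx a j * (pp dx a j ^ 2 + pp dx a j * pp dx a (j-1)%Z + pp dx a (j-1)%Z ^ 2))).
  set (d2 := fun j => pp dx a (j-1)%Z ^ 3 * a j / dx).
  assert (ad2 : asum d2).
  { apply (asum_ext (fun j => (/dx * (pp dx a (j + -1)%Z * pp dx a (j + -1)%Z)) * (pp dx a (j + -1)%Z * a j))).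
    intro j; unfold d2; replace (j - 1)%Z with (j + -1)%Z by lia; unfold Rdiv; ring.
    apply asum_mul_bnd. apply bnd_scal, bnd_mul; apply bnd_shift, bnd_pp; auto.
    apply l2_mul. apply l2_shift, l2_pp; auto. exact Ha. }
  assert (PT : forall j, pp dx a j ^ 4 = T j + (d2 (j+1)%Z - d2 j)).
  { intro j; unfold T, d2, ww, pp. rewrite Z.add_simpl_r, !Z.sub_add. field; auto. }
  assert (sT : zsummable T).
  { apply (zsummable_ext (fun j => pp dx a j ^ 4 + (-1) * (d2 (j+1)%Z - d2 j))).
    intro j; rewrite PT; ring.
    apply zsummable_plus; auto. apply zsummable_scal, asum_sum, asum_tele; auto. }
  assert (zPT : S4 = zsum T).
  { unfold S4. rewrite (zsum_ext _ (fun j => T j + (d2 (j+1)%Z - d2 j))) by auto.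
    rewrite zsum_plus, zsum_tele; auto. ring. apply asum_sum, asum_tele; auto. }
  assert (TH : zsum T <= zsum (fun j => 9*L^2/2 * ww dx a j ^ 2 + (/4 * pp dx a j ^ 4 + /4 * pp dx a (j-1)%Z ^ 4))).
  { apply zsum_le; auto. zs. intro j. unfold T.
    pose proof (pw3 (a j) (ww dx a j) (pp dx a j) (pp dx a (j-1)%Z) L (HL j)). lra. }
  assert (zTH : zsum (fun j => 9*L^2/2 * ww dx a j ^ 2 + (/4 * pp dx a j ^ 4 + /4 * pp dx a (j-1)%Z ^ 4))
     = 9*L^2/2 * W + (/4 * S4 + /4 * S4)).
  { repeat (rewrite zsum_plus; [|zs|zs]). rewrite !zsum_scal. rewrite z4. reflexivity. }
  assert (GN : S4 <= 9 * L^2 * W) by lra.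
  assert (W0 : 0 <= W) by (apply zsum_nonneg; auto; intro; apply pow2_ge_0).
  assert (S0 : 0 <= S) by (apply zsum_nonneg; auto; intro; apply pow2_ge_0).
  assert (N1 : l2norm dx (Dp dx (Dm dx a)) ^ 2 = dx * W).
  { unfold l2norm. rewrite pow2_sqrt.
    unfold ip. f_equal. apply zsum_ext. intro j. rewrite DpDm by auto. ring.
    unfold ip. rewrite (zsum_ext _ (fun j => ww dx a j ^ 2)).
    apply Rmult_le_pos; [lra | exact W0]. intro j. rewrite DpDm by auto. ring. }
  assert (zS : zsum (fun j => ((ww dx a (j+1)%Z + ww dx a j)/2)^2) = S).
  { unfold S. rewrite <- (proj2 (zshift_all 1 _ s3)). apply zsum_ext. intro j. cbv beta. rewrite Z.add_simpl_r. reflexivity. }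
  assert (N2 : l2norm dx (Dp dx (Dc dx a)) ^ 2 = dx * S).
  { unfold l2norm. rewrite pow2_sqrt.
    unfold ip. f_equal. rewrite <- zS. apply zsum_ext. intro j. rewrite DpDc by auto. ring.
    unfold ip. rewrite (zsum_ext _ (fun j => ((ww dx a (j+1)%Z + ww dx a j)/2)^2)).
    rewrite zS. apply Rmult_le_pos; [lra | exact S0]. intro j. rewrite DpDc by auto. ring. }
  rewrite N1, N2, LHSeq, zFG.
  assert (B1 : S4 / (2*eps) <= 9 * L^2 * W / (2*eps)).
  { apply Rmult_le_compat_r; auto. left; apply Rinv_0_lt_compat; lra. }
  assert (B2 : zsum H = L * (W/2 + S) + eps/2 * W + S4 / (2*eps)).
  { rewrite zH. field. lra. }
  assert (B3 : (eps + L + 9 * L ^ 2 * / eps) / 2 * (dx * W) + L * (dx * S)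
     = dx * (L * (W/2 + S) + eps/2 * W + 9 * L^2 * W / (2*eps))) by (field; lra).
  rewrite B3. apply Rmult_le_compat_l; lra.
Qed.
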